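(* Let $t_1,m_1,m_3,m_4\in\mathbb{R}$ with $m_3+im_4\neq 0$. Let $\mathfrak g$ be the real linear span of $E_1=\begin{pmatrix} t_1&2m_3-2im_4&-\frac{i}{2}(t_1m_1+2m_3^2+2m_4^2)&1\\0&0&0&0\\4i&0&2m_1&0\\0&0&0&0\end{pmatrix}$, $E_2=\begin{pmatrix}0&0&0&i\\0&0&0&0\\0&0&0&0\\0&0&0&0\end{pmatrix}$, $E_3=\begin{pmatrix}2m_3&-m_1&0&0\\0&m_3-im_4&0&1\\0&2i&2m_3&0\\0&0&0&0\end{pmatrix}$, $E_4=\begin{pmatrix}2m_4&im_1&0&0\\0&m_4+im_3&0&i\\0&2&2m_4&0\\0&0&0&0\end{pmatrix}$, $E_5=\begin{pmatrix}0&0&0&0\\0&0&0&0\\0&0&0&1\\0&0&0&0\end{pmatrix}$, and let $\mathfrak g^*$ be the real linear span of $E_1^*=\begin{pmatrix} t_1&0&-\frac{i}{2}(t_1m_1+2m_3^2+2m_4^2)&0\\0&0&0&0\\4i&0&2m_1&0\\0&0&0&0\end{pmatrix}$, $E_2^*=\begin{pmatrix}0&0&0&i\\0&0&0&0\\0&0&0&0\\0&0&0&0\end{pmatrix}$, $E_3^*=\mathrm{diag}(2,1,2,0)$, $E_4^*=\mathrm{diag}(0,i,0,0)$, $E_5^*=\begin{pmatrix}0&0&0&0\\0&0&0&0\\0&0&0&1\\0&0&0&0\end{pmatrix}$. Then $\mathfrak g$ and $\mathfrak g^*$ are similar: there is an invertible complex $4\times4$ matrix $C$ with $C^{-1}\mathfrak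 g\,C=\mathfrak g^*$.
   Context: All matrices are complex $4\times 4$; $\mathrm{diag}(a,b,c,d)$ denotes the diagonal matrix with those diagonal entries. *)

(* Defs.v *)
From HB Require Import structures.
From mathcomp Require Import all_boot all_order all_algebra.
From mathcomp Require Import complex.
From mathcomp Require Import reals.
Set Implicit Arguments. Unset Strict Implicit. Unset Printing Implicit Defensive.
Import Order.TTheory GRing.Theory Num.Theory.
Local Open Scope ring_scope.
Local Open Scope complex_scope.

Definition mx4 {T : Type} (d : T)
  (a00 a01 a02 a03 a10 a11 a12 a13 a20 a21 a22 a23 a30 a31 a32 a33 : T)
  : 'M[T]_4 :=
  \matrix_(i < 4, j < 4)
    nth d (nth [::] [:: [:: a00; a01; a02; a03]; [:: a10; a11; a12; a13];
                        [:: a20; a21; a22; a23]; [:: a30; a31; a32; a33]] i) j.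

Definition real_span (R : rcfType) (n k : nat) (E : 'I_k -> 'M[R[i]]_n)
  : 'M[R[i]]_n -> Prop :=
  fun A => exists c : 'I_k -> R, A = \sum_(l < k) ((c l)%:C *: E l).

Section Gens.
Variables (R : realType) (t1 m1 m3 m4 : R).
Local Notation "x %:c" := (x%:C : R[i]) (at level 2, format "x %:c").
Let z : R[i] := 0.
Let I : R[i] := 'i.
Let a13 : R[i] := - (I / 2%:R) * (t1 * m1 + 2%:R * m3 ^+ 2 + 2%:R * m4 ^+ 2)%:c.

Definition E1 : 'M[R[i]]_4 := mx4 z
  t1%:c (2%:R * m3%:c - 2%:R * I * m4%:c) a13 1
  z z z z
  (4%:R * I) z (2%:R * m1%:c) z
  z z z z.
Definition E2 : 'M[R[i]]_4 := mx4 z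
  z z z I   z z z z   z z z z   z z z z.
Definition E3 : 'M[R[i]]_4 := mx4 z
  (2%:R * m3%:c) (- m1%:c) z z
  z (m3%:c - I * m4%:c) z 1
  z (2%:R * I) (2%:R * m3%:c) z
  z z z z.
Definition E4 : 'M[R[i]]_4 := mx4 z
  (2%:R * m4%:c) (I * m1%:c) z z
  z (m4%:c + I * m3%:c) z I
  z 2%:R (2%:R * m4%:c) z
  z z z z.
Definition E5 : 'M[R[i]]_4 := mx4 z
  z z z z   z z z z   z z z 1   z z z z.

Definition E1s : 'M[R[i]]_4 := mx4 z
  t1%:c z a13 z
  z z z z
  (4%:R * I) z (2%:R * m1%:c) z
  z z z z.
Definition E2s : 'M[R[i]]_4 := E2.
Definition E3s : 'M[R[i]]_4 := mx4 z
  2%:R z z z   z 1 z z   z z 2%:R z   z z z z.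
Definition E4s : 'M[R[i]]_4 := mx4 z
  z z z z   z I z z   z z z z   z z z z.
Definition E5s : 'M[R[i]]_4 := E5.

Definition gens (k : 'I_5) : 'M[R[i]]_4 :=
  nth E1 [:: E1; E2; E3; E4; E5] k.
Definition gens_star (k : 'I_5) : 'M[R[i]]_4 :=
  nth E1s [:: E1s; E2s; E3s; E4s; E5s] k.
End Gens.

Definition lie_g (R : realType) (t1 m1 m3 m4 : R) := real_span (gens t1 m1 m3 m4).
Definition lie_g_star (R : realType) (t1 m1 m3 m4 : R) :=
  real_span (gens_star t1 m1 m3 m4).

(* Main.v *)
Require Import Defs.
From HB Require Import structures.
From mathcomp Require Import all_boot all_order all_algebra.
From mathcomp Require Import complex.
From mathcomp Require Import reals.
From mathcomp Require Import ring lra.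
Import Order.TTheory GRing.Theory Num.Theory.
Local Open Scope ring_scope.
Local Open Scope complex_scope.

Section S.
Variable R : realType.
Implicit Types x y : R[i].
Local Notation Re := complex.Re.
Local Notation Im := complex.Im.
Lemma ReD x y : Re (x + y) = Re x + Re y. Proof. case: x => a b; case: y => c d; reflexivity. Qed.
Lemma ImD x y : Im (x + y) = Im x + Im y. Proof. case: x => a b; case: y => c d; reflexivity. Qed.
Lemma ReN x : Re (- x) = - Re x. Proof. case: x => a b; reflexivity. Qed.
Lemma ImN x : Im (- x) = - Im x. Proof. case: x => a b; reflexivity. Qed.
Lemma ReM x y : Re (x * y) = Re x * Re y - Im x * Im y. Proof. case: x => a b; case: y => c d; reflexivity. Qed.
Lemma ImM x y : Im (x * y) = Re x * Im y + Im x * Re y. Proof. case: x => a b; case: y => c d; reflexivity. Qed.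
Lemma ReV x : Re (x^-1) = Re x / (Re x ^+ 2 + Im x ^+ 2). Proof. case: x => a b; reflexivity. Qed.
Lemma ImV x : Im (x^-1) = - (Im x / (Re x ^+ 2 + Im x ^+ 2)). Proof. case: x => a b; reflexivity. Qed.
Lemma Re0 : Re (0 : R[i]) = 0. Proof. by []. Qed.
Lemma Im0 : Im (0 : R[i]) = 0. Proof. by []. Qed.
Lemma Re1 : Re (1 : R[i]) = 1. Proof. by []. Qed.
Lemma Im1 : Im (1 : R[i]) = 0. Proof. by []. Qed.
Lemma ReC (a : R) : Re (a%:C) = a. Proof. by []. Qed.
Lemma ImC (a : R) : Im (a%:C) = 0. Proof. by []. Qed.
Lemma ReCx (a b : R) : Re (a +i* b) = a. Proof. by []. Qed.
Lemma ImCx (a b : R) : Im (a +i* b) = b. Proof. by []. Qed.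
Lemma Ren n : Re (n%:R : R[i]) = n%:R.
Proof. by elim: n => // n IH; rewrite !mulrS ReD IH. Qed.
Lemma Imn n : Im (n%:R : R[i]) = 0.
Proof. by elim: n => // n IH; rewrite !mulrS ImD IH addr0. Qed.
Lemma ceq x y : Re x = Re y -> Im x = Im y -> x = y.
Proof. by case: x; case: y => /= a b c d -> ->. Qed.
Lemma natC2 n : ((1 : R)%:C *+ n) = (n%:R : R) +i* 0.
Proof. by apply: ceq; rewrite /= ?Ren ?Imn. Qed.
Lemma natC n : (n%:R : R[i]) = (n%:R : R) +i* 0.
Proof. by apply: ceq; rewrite /= ?Ren ?Imn. Qed.
End S.

Local Notation Re := complex.Re.
Local Notation Im := complex.Im.
Ltac reim := rewrite ?(ReD, ImD, ReN, ImN, ReM, ImM, ReV, ImV, Re0, Im0, Re1, Im1, ReC, ImC, ReCx, ImCx, Ren, Imn).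

Definition coef {R : realType} (s : seq R) (l : 'I_5) : R := nth 0 s l.

Lemma mx4E {T : Type} (d : T) a00 a01 a02 a03 a10 a11 a12 a13 a20 a21 a22 a23 a30 a31 a32 a33 i j :
  mx4 d a00 a01 a02 a03 a10 a11 a12 a13 a20 a21 a22 a23 a30 a31 a32 a33 i j =
  nth d (nth [::] [:: [:: a00; a01; a02; a03]; [:: a10; a11; a12; a13];
                        [:: a20; a21; a22; a23]; [:: a30; a31; a32; a33]] i) j.
Proof. by rewrite /mx4 mxE. Qed.
Lemma mulE {T : pzRingType} {n} (A B : 'M[T]_n) i j : (A *m B) i j = \sum_k A i k * B k j.
Proof. by rewrite mxE. Qed.
Lemma scalE {T : pzRingType} {n} (c : T) (A : 'M[T]_n) i j : (c *: A) i j = c * A i j.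
Proof. by rewrite mxE. Qed.
Lemma addE {T : pzRingType} {n} (A B : 'M[T]_n) i j : (A + B) i j = A i j + B i j.
Proof. by rewrite mxE. Qed.
Lemma zeroE {T : pzRingType} {n} i j : (0 : 'M[T]_n) i j = 0.
Proof. by rewrite mxE. Qed.
Lemma oneE {T : pzRingType} {n} i j : (1%:M : 'M[T]_n) i j = (i == j)%:R.
Proof. by rewrite mxE. Qed.

Ltac mxcase := apply/matrixP; intros i j; rewrite !mxE;
  destruct i as [[|[|[|[|?]]]] ?]; destruct j as [[|[|[|[|?]]]] ?]; try done.

Lemma mx4_mul {T : pzRingType} (d : T) a00 a01 a02 a03 a10 a11 a12 a13 a20 a21 a22 a23 a30 a31 a32 a33 b00 b01 b02 b03 b10 b11 b12 b13 b20 b21 b22 b23 b30 b31 b32 b33 :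
  mx4 d a00 a01 a02 a03 a10 a11 a12 a13 a20 a21 a22 a23 a30 a31 a32 a33 *m mx4 d b00 b01 b02 b03 b10 b11 b12 b13 b20 b21 b22 b23 b30 b31 b32 b33 = mx4 d (a00 * b00 + a01 * b10 + a02 * b20 + a03 * b30) (a00 * b01 + a01 * b11 + a02 * b21 + a03 * b31) (a00 * b02 + a01 * b12 + a02 * b22 + a03 * b32) (a00 * b03 + a01 * b13 + a02 * b23 + a03 * b33) (a10 * b00 + a11 * b10 + a12 * b20 + a13 * b30) (a10 * b01 + a11 * b11 + a12 * b21 + a13 * b31) (a10 * b02 + a11 * b12 + a12 * b22 + a13 * b32) (a10 * b03 + a11 * b13 + a12 * b23 + a13 * b33) (a20 * b00 + a21 * b10 + a22 * b20 + a23 * b30) (a20 * b01 + a21 * b11 + a22 * b21 + a23 * b31) (a20 * b02 + a21 * b12 + a22 * b22 + a23 * b32) (a20 * b03 + a21 * b13 + a22 * b23 + a23 * b33) (a30 * b00 + a31 * b10 + a32 * b20 + a33 * b30) (a30 * b01 + a31 * b11 + a32 * b21 + a33 * b31) (a30 * b02 + a31 * b12 + a32 * b22 + a33 * b32) (a30 * b03 + a31 * b13 + a32 * b23 + a33 * b33).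
Proof. mxcase; rewrite !big_ord_recr big_ord0 /= !mxE /= add0r //. Qed.
Lemma mx4_add {T : pzRingType} (d : T) a00 a01 a02 a03 a10 a11 a12 a13 a20 a21 a22 a23 a30 a31 a32 a33 b00 b01 b02 b03 b10 b11 b12 b13 b20 b21 b22 b23 b30 b31 b32 b33 :
  mx4 d a00 a01 a02 a03 a10 a11 a12 a13 a20 a21 a22 a23 a30 a31 a32 a33 + mx4 d b00 b01 b02 b03 b10 b11 b12 b13 b20 b21 b22 b23 b30 b31 b32 b33 = mx4 d (a00 + b00) (a01 + b01) (a02 + b02) (a03 + b03) (a10 + b10) (a11 + b11) (a12 + b12) (a13 + b13) (a20 + b20) (a21 + b21) (a22 + b22) (a23 + b23) (a30 + b30) (a31 + b31) (a32 + b32) (a33 + b33).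
Proof. by mxcase. Qed.
Lemma mx4_scale {T : pzRingType} (d c : T) a00 a01 a02 a03 a10 a11 a12 a13 a20 a21 a22 a23 a30 a31 a32 a33 :
  c *: mx4 d a00 a01 a02 a03 a10 a11 a12 a13 a20 a21 a22 a23 a30 a31 a32 a33 = mx4 d (c * a00) (c * a01) (c * a02) (c * a03) (c * a10) (c * a11) (c * a12) (c * a13) (c * a20) (c * a21) (c * a22) (c * a23) (c * a30) (c * a31) (c * a32) (c * a33).
Proof. by mxcase. Qed.
Lemma mx4_0 {T : pzRingType} (d : T) : (0 : 'M[T]_4) = mx4 d 0 0 0 0 0 0 0 0 0 0 0 0 0 0 0 0.
Proof. by mxcase. Qed.
Lemma mx4_1 {T : pzRingType} (d : T) : (1 : 'M[T]_4) = mx4 d 1 0 0 0 0 1 0 0 0 0 1 0 0 0 0 1.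
Proof. by mxcase. Qed.
Section P.
Variables (R : realType) (t1 m1 m3 m4 : R).
Let k := (m3 ^+ 2 + m4 ^+ 2)^-1.
Definition Cm : 'M[R[i]]_4 := mx4 (0 : R[i])
  1 ((m1 * m3 * k) +i* (-(m1 * m4 * k))) 0 ((-(m1 * k / 2%:R)) +i* 0)
  0 1 0 ((-(m3 * k)) +i* (-(m4 * k)))
  0 ((-(2%:R * m4 * k)) +i* (-(2%:R * m3 * k))) 1 (0 +i* k)
  0 0 0 1.
Definition Cinv : 'M[R[i]]_4 := mx4 (0 : R[i])
  1 ((-(m1 * m3 * k)) +i* (m1 * m4 * k)) 0 ((-(m1 * k / 2%:R)) +i* 0)
  0 1 0 ((m3 * k) +i* (m4 * k))
  0 ((2%:R * m4 * k) +i* (2%:R * m3 * k)) 1 (0 +i* k)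
  0 0 0 1.

Definition Mrow (j : 'I_5) : seq R :=
  nth [::] [:: [:: 1; 0; 0; 0; 0]; [:: 0; 1; 0; 0; 0];
     [:: 0; m1 * m4 * k; m3; - m4; 2%:R * m4 * k];
     [:: 0; - (m1 * m3 * k); m4; m3; - (2%:R * m3 * k)];
     [:: 0; 0; 0; 0; 1]] j.
Definition Nrow (j : 'I_5) : seq R :=
  nth [::] [:: [:: 1; 0; 0; 0; 0]; [:: 0; 1; 0; 0; 0];
     [:: 0; 0; k * m3; k * m4; 0];
     [:: 0; m1 * k; - (k * m4); k * m3; 2%:R * k];
     [:: 0; 0; 0; 0; 1]] j.

Hypothesis hN : m3 ^+ 2 + m4 ^+ 2 != 0.

Ltac mxsolve :=
  rewrite ?big_ord_recr ?big_ord0 /=;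
  rewrite /Mrow /Nrow /coef /gens /gens_star /E1 /E2 /E3 /E4 /E5 /E1s /E2s /E3s /E4s /E5s /Cm /Cinv /=;
  rewrite ?(mx4_0 0) ?(mx4_1 0) ?mx4_scale ?mx4_add ?mx4_mul ?natC -?complexr0;
  congr mx4; apply: ceq; cbn; rewrite ?natC2 -?complexr0; cbn; rewrite /k; field; by [].

Lemma CinvC : Cinv *m Cm = 1.
Proof. mxsolve. Qed.

Lemma keyE (j : 'I_5) :
  gens t1 m1 m3 m4 j *m Cm = Cm *m \sum_(l < 5) ((coef (Mrow j) l)%:C *: gens_star t1 m1 m3 m4 l).
Proof.
case: j => [[|[|[|[|[|j]]]]] Hj] //; mxsolve.
Qed.

Lemma keyN (j : 'I_5) :
  gens_star t1 m1 m3 m4 j *m Cinv = Cinv *m \sum_(l < 5) ((coef (Nrow j) l)%:C *: gens t1 m1 m3 m4 l).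
Proof.
case: j => [[|[|[|[|[|j]]]]] Hj] //; mxsolve.
Qed.
End P.

Lemma lin (R : realType) (n : nat) (F G : 'I_5 -> 'M[R[i]]_n) (M : 'I_5 -> 'I_5 -> R) (c : 'I_5 -> R) :
  (forall j, F j = \sum_(l < 5) (M j l)%:C *: G l) ->
  \sum_(j < 5) (c j)%:C *: F j = \sum_(l < 5) (\sum_(j < 5) c j * M j l)%:C *: G l.
Proof.
move=> HF.
under eq_bigr do rewrite HF scaler_sumr.
rewrite exchange_big /=; apply: eq_bigr => l _.
rewrite raddf_sum scaler_suml; apply: eq_bigr => j _.
rewrite scalerA; congr (_ *: _); apply: ceq; cbn; ring.
Qed.

Lemma conj_sum (R : realType) (P Q : 'M[R[i]]_4) (c : 'I_5 -> R) (E : 'I_5 -> 'M[R[i]]_4) :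
  P *m (\sum_(j < 5) (c j)%:C *: E j) *m Q = \sum_(j < 5) (c j)%:C *: (P *m E j *m Q).
Proof.
rewrite mulmx_sumr mulmx_suml; apply: eq_bigr => j _.
by rewrite -scalemxAr -scalemxAl.
Qed.

Theorem proposition4p1 (R : realType) (t1 m1 m3 m4 : R) :
  (m3 +i* m4 : R[i]) != 0 ->
  exists C : 'M[R[i]]_4, C \in unitmx /\
    forall A : 'M[R[i]]_4,
      lie_g t1 m1 m3 m4 A <-> lie_g_star t1 m1 m3 m4 (invmx C *m A *m C).
Proof.
move=> hw.
have hN : m3 ^+ 2 + m4 ^+ 2 != 0.
  apply: contra hw => h.
  have /andP[] : (m3 ^+ 2 == 0) && (m4 ^+ 2 == 0).
    by rewrite -paddr_eq0 ?sqr_ge0.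
  by rewrite !sqrf_eq0 => /eqP -> /eqP ->.
have hCC : Cinv R m1 m3 m4 *m Cm R m1 m3 m4 = 1 by apply: CinvC.
have [_ uC] := mulmx1_unit hCC.
have hCC' := mulmx1C hCC.
have hinv : invmx (Cm R m1 m3 m4) = Cinv R m1 m3 m4.
  have hCC1 : Cinv R m1 m3 m4 *m Cm R m1 m3 m4 = 1%:M := hCC.
  by rewrite -[invmx _]mul1mx -hCC1 -mulmxA mulmxV // mulmx1.
exists (Cm R m1 m3 m4); split => // A; rewrite hinv; split.
- case=> c ->.
  exists (fun l => \sum_(j < 5) c j * coef (Mrow R m1 m3 m4 j) l).
  rewrite conj_sum.
  have HF : forall j, Cinv R m1 m3 m4 *m gens t1 m1 m3 m4 j *m Cm R m1 m3 m4 =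
      \sum_(l < 5) (coef (Mrow R m1 m3 m4 j) l)%:C *: gens_star t1 m1 m3 m4 l.
    by move=> j; rewrite -mulmxA keyE // mulmxA hCC mul1mx.
  under eq_bigr do rewrite HF scaler_sumr.
  rewrite exchange_big /=; apply: eq_bigr => l _.
  rewrite raddf_sum scaler_suml; apply: eq_bigr => j _.
  rewrite scalerA; congr (_ *: _); apply: ceq; cbn; ring.
- case=> d hd.
  exists (fun j => \sum_(l < 5) d l * coef (Nrow R m1 m3 m4 l) j).
  have eA : A = Cm R m1 m3 m4 *m (Cinv R m1 m3 m4 *m A *m Cm R m1 m3 m4) *m Cinv R m1 m3 m4.
    by rewrite !mulmxA hCC' mul1mx -mulmxA hCC' mulmx1.
  rewrite eA hd conj_sum.
  have HF : forall l, Cm R m1 m3 m4 *m gens_star t1 m1 m3 m4 l *m Cinv R m1 m3 m4 =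
      \sum_(j < 5) (coef (Nrow R m1 m3 m4 l) j)%:C *: gens t1 m1 m3 m4 j.
    by move=> l; rewrite -mulmxA keyN // mulmxA hCC' mul1mx.
  under eq_bigr do rewrite HF scaler_sumr.
  rewrite exchange_big /=; apply: eq_bigr => l _.
  rewrite raddf_sum scaler_suml; apply: eq_bigr => j _.
  rewrite scalerA; congr (_ *: _); apply: ceq; cbn; ring.
Qed.
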